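(* Let $\bm{L}_t\in\mathbb{R}^{n_1\times n_1}$ be a diagonal matrix with positive diagonal entries. Let $\bm{X}_t,\bm{X}\in\mathbb{R}^{n_1\times n_2}$ be rank-$r$ matrices with compact SVDs $\bm{X}_t=\bm{U}_t\bm{\Sigma}_t\bm{V}_t^T$ and $\bm{X}=\bm{U}\bm{\Sigma}\bm{V}^T$ ($\bm{U}_t,\bm{U}\in\mathbb{R}^{n_1\times r}$ with orthonormal columns). Define $\widetilde{\bm{U}}_t=\bm{U}_t(\bm{U}_t^T\bm{L}_t^{1/4}\bm{U}_t)^{-1/2}$ and $\widetilde{\bm{U}}=\bm{U}(\bm{U}^T\bm{L}_t^{1/4}\bm{U})^{-1/2}$. Then $$\big\|\widetilde{\bm{U}}_t\widetilde{\bm{U}}_t^T\bm{L}_t^{1/4}-\widetilde{\bm{U}}\widetilde{\bm{U}}^T\bm{L}_t^{1/4}\big\|_{\bm{L}_t^{1/4}}\le\frac{\mathrm{cond}(\bm{L}_t^{3/8})}{\sigma_{\min}(\bm{X})}\,\|\bm{X}_t-\bm{X}\|_2.$$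
   Context: For symmetric positive definite $\bm{M}$, $\|\bm{x}\|_{\bm{M}}=\langle\bm{M}\bm{x},\bm{x}\rangle^{1/2}$ and for a square matrix $\bm{A}$, $\|\bm{A}\|_{\bm{M}}=\sup_{\bm{x}\neq0}\|\bm{A}\bm{x}\|_{\bm{M}}/\|\bm{x}\|_{\bm{M}}$. $\|\cdot\|_2$ is the spectral norm, $\sigma_{\min}(\bm{X})$ the smallest nonzero singular value of $\bm{X}$, and $\mathrm{cond}(\bm{Z})=\sigma_{\max}(\bm{Z})/\sigma_{\min}(\bm{Z})$. The columns of $\widetilde{\bm{U}}_t$, $\widetilde{\bm{U}}$ are orthonormal with respect to $\langle\bm{x},\bm{y}\rangle_{\bm{L}_t^{1/4}}=\langle\bm{L}_t^{1/4}\bm{x},\bm{y}\rangle$. In the paper $\bm{L}_t=\epsilon_t\bm{I}+\mathrm{diag}(\bm{G}_t\bm{G}_t^T)$, $\epsilon_t>0$. *)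

(* Defs.v *)
From HB Require Import structures.
From mathcomp Require Import all_boot all_order all_algebra.
From mathcomp Require Import all_classical all_reals all_analysis.
Set Implicit Arguments. Unset Strict Implicit. Unset Printing Implicit Defensive.
Import Order.TTheory GRing.Theory Num.Theory.
Local Open Scope ring_scope.
Local Open Scope classical_set_scope.

Section Defs.
Variable R : realType.

Definition diag_powR n (L : 'M[R]_n) (p : R) : 'M[R]_n :=
  \matrix_(i, j) (if i == j then (L i i) `^ p else 0).

Definition vnormM n (M : 'M[R]_n) (x : 'cV[R]_n) : R :=
  Num.sqrt ((x^T *m (M *m x)) 0 0).

Definition opnormM n (M A : 'M[R]_n) : R :=
  sup [set vnormM M (A *m x) / vnormM M x | x in [set x : 'cV[R]_n | x != 0]].

Definition vnorm2 n (x : 'cV[R]_n) : R := Num.sqrt ((x^T *m x) 0 0).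

Definition spec_norm m n (A : 'M[R]_(m, n)) : R :=
  sup [set vnorm2 (A *m x) / vnorm2 x | x in [set x : 'cV[R]_n | x != 0]].

Definition sigma_min m n (X : 'M[R]_(m, n)) : R :=
  inf [set Num.sqrt l | l in [set l : R | eigenvalue (X^T *m X) l /\ 0 < l]].

Definition cond m n (Z : 'M[R]_(m, n)) : R := spec_norm Z / sigma_min Z.

Definition is_compact_svd m n r (X : 'M[R]_(m, n)) (U : 'M[R]_(m, r))
    (S : 'M[R]_r) (V : 'M[R]_(n, r)) : Prop :=
  [/\ U^T *m U = 1%:M, V^T *m V = 1%:M, is_diag_mx S,
      (forall i, 0 < S i i) & X = U *m S *m V^T].

Definition is_inv_sqrtmx r (S M : 'M[R]_r) : Prop :=
  [/\ S^T = S, (forall x : 'cV[R]_r, x != 0 -> 0 < (x^T *m (S *m x)) 0 0)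
    & S *m S = invmx M].

End Defs.

(* Main.v *)
Require Import Defs.
From HB Require Import structures.
From mathcomp Require Import all_boot all_order all_algebra.
From mathcomp Require Import all_classical all_reals all_analysis.
From mathcomp Require Import ring lra.
Import Order.TTheory GRing.Theory Num.Theory.
Set Implicit Arguments. Unset Strict Implicit. Unset Printing Implicit Defensive.
Local Open Scope ring_scope.

Section IP.
Variable R : realType.
Variable n : nat.
Variable M : 'M[R]_n.
Hypothesis MT : M^T = M.
Hypothesis Mpd : forall x : 'cV[R]_n, x != 0 -> 0 < (x^T *m (M *m x)) 0 0.

Implicit Types x y z w : 'cV[R]_n.
Definition ip (x y : 'cV[R]_n) := (x^T *m (M *m y)) 0 0.
Definition qf x := ip x x.

Lemma ipC x y : ip x y = ip y x.
Proof.
rewrite /ip -[in LHS](trmxK (x^T *m (M *m y))) mxE.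
by rewrite !trmx_mul trmxK MT mulmxA.
Qed.

Lemma ipDr x y z : ip x (y + z) = ip x y + ip x z.
Proof. by rewrite /ip !mulmxDr mxE. Qed.
Lemma ipDl x y z : ip (y + z) x = ip y x + ip z x.
Proof. by rewrite ipC ipDr ![ip x _]ipC. Qed.
Lemma ipZr a x y : ip x (a *: y) = a * ip x y.
Proof. by rewrite /ip -!scalemxAr mxE. Qed.
Lemma ipZl a x y : ip (a *: y) x = a * ip y x.
Proof. by rewrite ipC ipZr ipC. Qed.
Lemma ipNr x y : ip x (- y) = - ip x y.
Proof. by rewrite -scaleN1r ipZr mulN1r. Qed.
Lemma ipNl x y : ip (- y) x = - ip y x.
Proof. by rewrite ipC ipNr ipC. Qed.
Lemma ipBr x y z : ip x (y - z) = ip x y - ip x z.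
Proof. by rewrite ipDr ipNr. Qed.
Lemma ipBl x y z : ip (y - z) x = ip y x - ip z x.
Proof. by rewrite ipDl ipNl. Qed.
Lemma ip0r x : ip x 0 = 0.
Proof. by rewrite /ip !mulmx0 mxE. Qed.
Lemma ip0l x : ip 0 x = 0.
Proof. by rewrite ipC ip0r. Qed.

Lemma qf_ge0 x : 0 <= qf x.
Proof.
have [->|nx] := eqVneq x 0; first by rewrite /qf ip0r.
exact/ltW/Mpd.
Qed.

Lemma qf_eq0 x : qf x = 0 -> x = 0.
Proof.
have [//|nx] := eqVneq x 0.
by move=> h; have := Mpd nx; rewrite -/(ip x x) -/(qf x) h ltxx.
Qed.

Lemma qfD x y : qf (x + y) = qf x + 2 * ip x y + qf y.
Proof. rewrite /qf !ipDl !ipDr [ip y x]ipC; ring. Qed.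
Lemma qfB x y : qf (x - y) = qf x - 2 * ip x y + qf y.
Proof. rewrite /qf !ipBl !ipBr [ip y x]ipC; ring. Qed.

Lemma qf_subC x y : qf (x - y) = qf (y - x).
Proof. rewrite !qfB [ip x y]ipC; ring. Qed.

Lemma qf0 : qf 0 = 0.
Proof. by rewrite /qf ip0r. Qed.

Lemma CS x y : ip x y ^+ 2 <= qf x * qf y.
Proof.
have [y0|ny] := eqVneq y 0.
  by rewrite y0 ip0r expr0n /= mulr_ge0 // qf_ge0.
have qy : 0 < qf y by exact: Mpd.
have h := qf_ge0 (qf y *: x - ip x y *: y).
rewrite qfB /qf !ipZl !ipZr ipC in h.
rewrite -/(qf x) -/(qf y) in h *.
rewrite ipC.
have h2 : 0 <= qf y * (qf x * qf y - ip y x ^+ 2) by move: h; congr (_ <= _); ring.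
by move: h2; rewrite pmulr_rge0 // subr_ge0.
Qed.

Lemma ip_adj (A : 'M[R]_n) x y : A^T *m M = M *m A -> ip (A *m x) y = ip x (A *m y).
Proof. by move=> h; rewrite /ip trmx_mul -mulmxA (mulmxA A^T) h !mulmxA. Qed.


Section Proj.
Variable r : nat.
Variables (U : 'M[R]_(n, r)) (B : 'M[R]_(r, n)).
Hypothesis BU : B *m U = 1%:M.
Hypothesis SA : (U *m B)^T *m M = M *m (U *m B).

Definition proj := U *m B.

Lemma projU : proj *m U = U.
Proof. by rewrite /proj -mulmxA BU mulmx1. Qed.

Lemma projK x : proj *m (proj *m x) = proj *m x.
Proof. by rewrite mulmxA {1}/proj /proj mulmxA -(mulmxA U B U) BU mulmx1. Qed.

Lemma proj_adj x y : ip (proj *m x) y = ip x (proj *m y).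
Proof. exact: ip_adj. Qed.

Lemma proj_co x : proj *m (x - proj *m x) = 0.
Proof. by rewrite mulmxBr projK subrr. Qed.

Lemma proj_orth x y : ip (proj *m x) (y - proj *m y) = 0.
Proof. by rewrite proj_adj proj_co ip0r. Qed.

Lemma pyth x : qf x = qf (proj *m x) + qf (x - proj *m x).
Proof.
have e : x = proj *m x + (x - proj *m x) by rewrite addrC subrK.
rewrite [in LHS]e [in LHS]qfD proj_orth; ring.
Qed.

Lemma qf_proj_le x : qf (proj *m x) <= qf x.
Proof. by rewrite [leRHS]pyth lerDl qf_ge0. Qed.

Lemma qf_coproj_le x : qf (x - proj *m x) <= qf x.
Proof. by rewrite [leRHS]pyth lerDr qf_ge0. Qed.

Lemma ip_proj_self x : ip (proj *m x) x = qf (proj *m x).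
Proof.
have e : x = proj *m x + (x - proj *m x) by rewrite addrC subrK.
transitivity (ip (proj *m x) (proj *m x + (x - proj *m x))); first by rewrite -e.
by rewrite ipDr proj_orth addr0.
Qed.

End Proj.

Section Two.
Variable r : nat.
Variables (U Ut : 'M[R]_(n, r)) (B Bt : 'M[R]_(r, n)).
Hypothesis BU : B *m U = 1%:M.
Hypothesis SA : (U *m B)^T *m M = M *m (U *m B).
Hypothesis BUt : Bt *m Ut = 1%:M.
Hypothesis SAt : (Ut *m Bt)^T *m M = M *m (Ut *m Bt).
Variable k : R.
Local Notation Pi := (proj U B).
Local Notation Pt := (proj Ut Bt).
Hypothesis C1 : forall b, qf (Pi *m b - Pt *m (Pi *m b)) <= k ^+ 2 * qf (Pi *m b).

Lemma C1' w : Pi *m w = w -> qf (w - Pt *m w) <= k ^+ 2 * qf w.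
Proof. by move=> h; have := C1 w; rewrite h. Qed.

Lemma claim2 z : Pt *m z = z -> qf (z - Pi *m z) <= k ^+ 2 * qf z.
Proof.
move=> hz.
have [hk|hk] := lerP 1 (k ^+ 2).
  apply: (le_trans (qf_coproj_le BU SA z)).
  by rewrite ler_peMl // qf_ge0.
set N := Bt *m U.
have Nu : N \in unitmx.
  rewrite unitmxE unitfE -det_tr; apply/negP => /det0P [v nv vN].
  set c := v^T.
  have Nc : N *m c = 0 by rewrite /c -(trmxK N) -trmx_mul vN trmx0.
  set w := U *m c.
  have Piw : Pi *m w = w by rewrite /w mulmxA projU.
  have Ptw : Pt *m w = 0 by rewrite /w /proj -!mulmxA (mulmxA Bt) Nc !mulmx0.
  have := C1' Piw; rewrite Ptw subr0 => h.
  have qw : qf w = 0.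
    apply/eqP; rewrite eq_le qf_ge0 andbT.
    have : qf w * (1 - k ^+ 2) <= 0 by rewrite mulrBr mulr1 subr_le0 mulrC.
    by rewrite pmulr_lle0 // subr_gt0.
  have w0 := qf_eq0 qw.
  have c0 : c = 0 by rewrite -(mul1mx c) -BU -mulmxA -/w w0 mulmx0.
  by move: nv; rewrite -(trmxK v) -/c c0 trmx0 eqxx.
set d := Bt *m z.
set w := U *m (invmx N *m d).
have Piw : Pi *m w = w by rewrite /w mulmxA projU.
have Ptw : Pt *m w = z.
  by rewrite /w /proj -!mulmxA (mulmxA Bt) -/N (mulmxA N) mulmxV // mul1mx /d mulmxA hz.
have e1 : ip (Pi *m z) w = qf z.
  by rewrite (proj_adj SA) Piw -[in LHS]Ptw (ip_proj_self BUt SAt) Ptw.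
have cs := CS (Pi *m z) w.
rewrite e1 in cs.
have pz := pyth BU SA z.
have pw := pyth BUt SAt w.
rewrite Ptw in pw.
have c1 := C1' Piw.
rewrite Ptw in c1.
move: cs pz pw c1.
set A := qf (Pi *m z); set Bq := qf (z - Pi *m z); set W := qf w; set D := qf (w - z).
set Z := qf z.
have A0 : 0 <= A by apply: qf_ge0.
have B0 : 0 <= Bq by apply: qf_ge0.
have D0 : 0 <= D by apply: qf_ge0.
move=> cs pz pw c1.
have Z0 : 0 <= Z by rewrite pz addr_ge0.
have [W0|Wp] := eqVneq W 0.
  have : Z ^+ 2 <= 0 by rewrite W0 mulr0 in cs.
  move=> h; have Z0' : Z = 0 by apply/eqP; rewrite -sqrf_eq0 eq_le h sqr_ge0.
  by rewrite Z0' mulr0; move: pz; rewrite Z0' => pz; lra.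
have Wq : 0 < W by rewrite lt_def Wp qf_ge0.
rewrite -(ler_pM2r Wq).
have k0 : 0 <= k ^+ 2 by apply: sqr_ge0.
have h1 : 0 <= Z * (k ^+ 2 * W - D) by rewrite mulr_ge0 // subr_ge0.
have h2 : Bq * W = Z * W - A * W by rewrite pz; ring.
rewrite h2.
have h3 : Z * W - A * W <= Z * W - Z ^+ 2 by rewrite lerD2l lerN2.
apply: (le_trans h3).
move: h1; rewrite pw; move: (k ^+ 2) => K h1.
rewrite -subr_ge0; move: h1; congr (_ <= _); ring.
Qed.

Lemma claim3 x : qf (Pt *m (x - Pi *m x)) <= k ^+ 2 * qf (x - Pi *m x).
Proof.
set w := x - Pi *m x.
set z := Pt *m w.
have Piw : Pi *m w = 0 by apply: proj_co.
have e : qf z = ip w (z - Pi *m z).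
  rewrite ipBr -(proj_adj SA) Piw ip0l subr0.
  by rewrite /qf /z (proj_adj SAt) projK.
have hz : Pt *m z = z by rewrite /z projK.
have c2 := claim2 hz.
have cs := CS w (z - Pi *m z).
rewrite -e in cs.
have h : qf z ^+ 2 <= qf z * (k ^+ 2 * qf w).
  apply: (le_trans cs).
  rewrite [X in _ <= X](_ : _ = qf w * (k ^+ 2 * qf z)); last ring.
  by rewrite ler_wpM2l ?qf_ge0.
have [z0|zp] := eqVneq (qf z) 0.
  by rewrite z0 mulr_ge0 // ?sqr_ge0 ?qf_ge0.
have zq : 0 < qf z by rewrite lt_def zp qf_ge0.
by move: h; rewrite expr2 ler_pM2l.
Qed.

Lemma final x : qf ((Pt - Pi) *m x) <= k ^+ 2 * qf x.
Proof.
have e : (Pt - Pi) *m x = Pt *m (x - Pi *m x) - (Pi *m x - Pt *m (Pi *m x)).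
  by rewrite mulmxBl mulmxBr opprB addrA subrK.
rewrite e qfB.
have o : ip (Pt *m (x - Pi *m x)) (Pi *m x - Pt *m (Pi *m x)) = 0 by apply: proj_orth.
rewrite o mulr0 subr0 (pyth BU SA x) mulrDr addrC.
apply: lerD; [exact: C1 | exact: claim3].
Qed.

End Two.

End IP.

Section Conc.
Variable R : realType.

Lemma cV_neq0 n (x : 'cV[R]_n) : x != 0 -> exists i, x i 0 != 0.
Proof.
move=> nx; case: (pselect (exists i, x i 0 != 0)) => // h.
case/eqP: nx; apply/matrixP => i j; rewrite (ord1 j) !mxE.
by apply/eqP/negPn/negP => hi; apply: h; exists i.
Qed.

Definition sq2 n (x : 'cV[R]_n) := (x^T *m x) 0 0.

Lemma sq2E n (x : 'cV[R]_n) : sq2 x = \sum_i x i 0 ^+ 2.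
Proof. by rewrite /sq2 mxE; apply: eq_bigr => i _; rewrite mxE expr2. Qed.

Lemma ipdE n (m : 'rV[R]_n) x y : ip (diag_mx m) x y = \sum_i m 0 i * x i 0 * y i 0.
Proof.
rewrite /ip mxE; apply: eq_bigr => i _; rewrite mul_diag_mx !mxE; ring.
Qed.

Lemma sq2_ge0 n (x : 'cV[R]_n) : 0 <= sq2 x.
Proof. by rewrite sq2E sumr_ge0 // => i _; rewrite sqr_ge0. Qed.

Lemma entry_le_sq2 n (x : 'cV[R]_n) i : x i 0 ^+ 2 <= sq2 x.
Proof.
rewrite sq2E (bigD1 i) //= lerDl sumr_ge0 // => j _; exact: sqr_ge0.
Qed.

Lemma sq2_gt0 n (x : 'cV[R]_n) : x != 0 -> 0 < sq2 x.
Proof.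
move=> /cV_neq0 [i hi]; apply: (lt_le_trans _ (entry_le_sq2 x i)).
by rewrite exprn_even_gt0.
Qed.

Lemma diag_pd n (m : 'rV[R]_n) : (forall i, 0 < m 0 i) ->
  forall x : 'cV[R]_n, x != 0 -> 0 < (x^T *m (diag_mx m *m x)) 0 0.
Proof.
move=> hm x /cV_neq0 [i hi].
have := ipdE m x x; rewrite /ip => ->.
rewrite (bigD1 i) //=.
have a : 0 < m 0 i * x i 0 * x i 0 by rewrite -mulrA mulr_gt0 // -expr2 exprn_even_gt0.
have b : 0 <= \sum_(j | j != i) m 0 j * x j 0 * x j 0.
  by rewrite sumr_ge0 // => j _; rewrite -mulrA -expr2 mulr_ge0 ?sqr_ge0 ?ltW.
lra.
Qed.

Lemma sq2_orth n r (W : 'M[R]_(n, r)) c : W^T *m W = 1%:M -> sq2 (W *m c) = sq2 c.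
Proof. by move=> h; rewrite /sq2 trmx_mul -mulmxA (mulmxA W^T) h mul1mx. Qed.

Lemma weight_le n (m : 'rV[R]_n) c2 y w : (forall i j, m 0 i <= c2 * m 0 j) ->
  (forall i, 0 <= m 0 i) ->
  qf (diag_mx m) y * sq2 w <= c2 * sq2 y * qf (diag_mx m) w.
Proof.
move=> hm hm0; rewrite /qf !ipdE !sq2E -mulrA.
rewrite [in X in X <= _]mulr_suml [in X in _ <= X]mulr_suml [in X in _ <= X]mulr_sumr.
apply: ler_sum => i _.
rewrite [in X in X <= _]mulr_sumr [in X in _ <= X]mulrA [in X in _ <= X]mulr_sumr.
apply: ler_sum => j _.
have p0 : 0 <= y i 0 ^+ 2 * w j 0 ^+ 2 by rewrite mulr_ge0 // sqr_ge0.
rewrite [leLHS](_ : _ = m 0 i * (y i 0 ^+ 2 * w j 0 ^+ 2)); last ring.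
rewrite [leRHS](_ : _ = (c2 * m 0 j) * (y i 0 ^+ 2 * w j 0 ^+ 2)); last ring.
by rewrite ler_wpM2r.
Qed.

End Conc.

Section SupInf.
Variable R : realType.
Local Open Scope classical_set_scope.

Lemma sq2_0 n : sq2 (0 : 'cV[R]_n) = 0.
Proof. by rewrite /sq2 mulmx0 mxE. Qed.

Lemma vnorm2E n (x : 'cV[R]_n) : vnorm2 x = Num.sqrt (sq2 x).
Proof. by []. Qed.

Lemma abs_entry_le n (x : 'cV[R]_n) j : `|x j 0| <= vnorm2 x.
Proof.
by rewrite vnorm2E -sqrtr_sqr ler_sqrt ?sq2_ge0 // entry_le_sq2.
Qed.

Lemma sq_le (a b : R) : `|a| <= b -> a ^+ 2 <= b ^+ 2.
Proof.
move=> h; rewrite -(real_normK (num_real a)).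
have h0 : 0 <= `|a| by [].
nra.
Qed.

Lemma spec_has_ub p n (A : 'M[R]_(p, n)) :
  has_ubound [set vnorm2 (A *m x) / vnorm2 x | x in [set x : 'cV[R]_n | x != 0]].
Proof.
set C := Num.sqrt (\sum_i (\sum_j `|A i j|) ^+ 2).
exists C => _ [x nx <-].
have vp : 0 < vnorm2 x by rewrite vnorm2E sqrtr_gt0 sq2_gt0.
rewrite ler_pdivrMr // /C vnorm2E vnorm2E -sqrtrM ?sumr_ge0 // => [|i _]; last exact: sqr_ge0.
rewrite ler_sqrt; last by rewrite mulr_ge0 ?sq2_ge0 // sumr_ge0 // => i _; exact: sqr_ge0.
rewrite sq2E mulr_suml; apply: ler_sum => i _.
have h : `|(A *m x) i 0| <= (\sum_j `|A i j|) * vnorm2 x.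
  rewrite mxE mulr_suml; apply: (le_trans (ler_norm_sum _ _ _)); apply: ler_sum => j _.
  by rewrite normrM ler_wpM2l // abs_entry_le.
have := sq_le h; rewrite exprMn vnorm2E sqr_sqrtr ?sq2_ge0 //.
Qed.

Lemma spec_bound p n (A : 'M[R]_(p, n)) z :
  sq2 (A *m z) <= spec_norm A ^+ 2 * sq2 z.
Proof.
have [->|nz] := eqVneq z 0; first by rewrite mulmx0 !sq2_0 mulr0.
have vp : 0 < vnorm2 z by rewrite vnorm2E sqrtr_gt0 sq2_gt0.
have h : vnorm2 (A *m z) / vnorm2 z <= spec_norm A.
  by apply: ub_le_sup; [exact: spec_has_ub | exists z].
rewrite ler_pdivrMr // in h.
have h1 : `|vnorm2 (A *m z)| <= spec_norm A * vnorm2 z by rewrite ger0_norm ?sqrtr_ge0.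
have h2 := sq_le h1.
by move: h2; rewrite exprMn !vnorm2E !sqr_sqrtr ?sq2_ge0.
Qed.

Lemma spec_ge0 p n (A : 'M[R]_(p, n)) : 0 <= spec_norm A.
Proof.
case: (pselect (exists z : 'cV[R]_n, z != 0)) => [[z nz]|h].
  have vp : 0 < vnorm2 z by rewrite vnorm2E sqrtr_gt0 sq2_gt0.
  have h : vnorm2 (A *m z) / vnorm2 z <= spec_norm A.
    by apply: ub_le_sup; [exact: spec_has_ub | exists z].
  by apply: le_trans h; rewrite divr_ge0 // sqrtr_ge0.
rewrite /spec_norm; set E := (X in sup X).
have -> : E = set0.
  by apply/seteqP; split => // t [x nx _]; case: h; exists x.
by rewrite sup0.
Qed.

Lemma rV_neq0 n (v : 'rV[R]_n) : v != 0 -> exists j, v 0 j != 0.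
Proof.
move=> nv; have : v^T != 0 by rewrite -(inj_eq (@trmx_inj _ _ _)) trmx0 trmxK.
by move=> /cV_neq0 [j]; rewrite mxE; exists j.
Qed.

Lemma sigma_bounds p k r (Y : 'M[R]_(p, k)) (W : 'M[R]_(k, r)) (lam : 'rV[R]_r) :
  W^T *m W = 1%:M -> (forall j, 0 < lam 0 j) ->
  Y^T *m Y = W *m diag_mx lam *m W^T ->
  (forall j, sigma_min Y <= Num.sqrt (lam 0 j)) /\ (forall j0 : 'I_r, 0 < sigma_min Y).
Proof.
move=> WW lp YY.
set S := [set l : R | eigenvalue (Y^T *m Y) l /\ 0 < l].
have eig_in : forall j, S (lam 0 j).
  move=> j; split => //; apply/eigenvalueP.
  set e := delta_mx 0 j : 'rV[R]_r.
  have eD : e *m diag_mx lam = lam 0 j *: e.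
    apply/matrixP => a b; rewrite mul_mx_diag !mxE /=.
    case: (eqVneq b j) => [->|nb]; first by rewrite mulrC.
    by rewrite andbF mul0r mulr0.
  exists (e *m W^T).
    by rewrite YY !mulmxA -(mulmxA e) WW mulmx1 eD scalemxAl.
  apply/eqP => h; have : e *m W^T *m W = 0 by rewrite h mul0mx.
  rewrite -mulmxA WW mulmx1 => /matrixP /(_ 0 j); rewrite !mxE !eqxx /=.
  by move/eqP; rewrite oner_eq0.
have in_eig : forall l, S l -> exists j, l = lam 0 j.
  move=> l [/eigenvalueP [v vG nv] lp0].
  set u := v *m W.
  have uD : u *m diag_mx lam = l *: u.
    have : v *m (Y^T *m Y) *m W = l *: v *m W by rewrite vG.
    by rewrite YY !mulmxA -(mulmxA _ W^T W) WW mulmx1 -scalemxAl.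
  have nu : u != 0.
    apply/eqP => u0.
    have : l *: v = 0 by rewrite -vG YY !mulmxA -/u u0 !mul0mx.
    by move/eqP; rewrite scaler_eq0 (gt_eqF lp0) /= (negbTE nv).
  have [j hj] := rV_neq0 nu.
  clearbody u.
  exists j; move/matrixP: uD => /(_ 0 j); rewrite mul_mx_diag !mxE.
  by move=> h; apply: (mulIf hj); rewrite -h mulrC.
set T := [set Num.sqrt l | l in S].
have lbT : has_lbound T by exists 0 => _ [l _ <-]; exact: sqrtr_ge0.
split.
  move=> j; apply: (ge_inf lbT); exists (lam 0 j) => //.
move=> j0.
have [jm _ hjm] := arg_minP (fun j => lam 0 j) (erefl true : xpredT j0).
apply: (@lt_le_trans _ _ (Num.sqrt (lam 0 jm))); first by rewrite sqrtr_gt0.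
apply: lb_le_inf.
  by exists (Num.sqrt (lam 0 j0)); exists (lam 0 j0) => //; exact: eig_in.
move=> _ [l Sl <-]; have [j ->] := in_eig l Sl.
by rewrite ler_sqrt ?(ltW (lp j)) // hjm.
Qed.

End SupInf.

Section Main.
Variable R : realType.
Local Open Scope classical_set_scope.

Lemma diag_powR_E n (L : 'M[R]_n) p :
  diag_powR L p = diag_mx (\row_i (L i i `^ p)).
Proof.
apply/matrixP => i j; rewrite !mxE.
by case: (eqVneq i j) => [->|nij]; rewrite ?mulr1n ?mulr0n.
Qed.

Lemma pow14 (x : R) : 0 <= x -> x `^ (1 / 4) = (x `^ (1 / 8)) ^+ 2.
Proof.
move=> x0; rewrite -powR_mulrn ?powR_ge0 // -powRrM; congr (_ `^ _).
by field.
Qed.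

Lemma pow38 (x : R) : 0 <= x -> x `^ (3 / 8) = (x `^ (1 / 8)) ^+ 3.
Proof.
move=> x0; rewrite -powR_mulrn ?powR_ge0 // -powRrM; congr (_ `^ _).
by field.
Qed.

Lemma sigma_ge0 p k (Y : 'M[R]_(p, k)) : 0 <= sigma_min Y.
Proof.
rewrite /sigma_min; set E := (X in inf X).
case: (pselect (exists e, E e)) => [[e Ee]|h].
  by apply: lb_le_inf; [exists e | move=> _ [l _ <-]; exact: sqrtr_ge0].
have -> : E = set0 by apply/seteqP; split => // t Et; case: h; exists t.
by rewrite inf0.
Qed.

Lemma cond_ge0 p k (Y : 'M[R]_(p, k)) : 0 <= cond Y.
Proof. by rewrite /cond divr_ge0 ?spec_ge0 ?sigma_ge0. Qed.

Lemma sq2_delta n (i : 'I_n) : sq2 (delta_mx i 0 : 'cV[R]_n) = 1.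
Proof.
rewrite sq2E (bigD1 i) //= big1 ?addr0 => [|j nj]; first by rewrite !mxE !eqxx expr1n.
by rewrite !mxE (negbTE nj) expr0n.
Qed.

Lemma sq2Z n a (x : 'cV[R]_n) : sq2 (a *: x) = a ^+ 2 * sq2 x.
Proof. by rewrite !sq2E mulr_sumr; apply: eq_bigr => i _; rewrite mxE exprMn. Qed.

Lemma cond_diag n (d : 'rV[R]_n) : (forall i, 0 < d 0 i) ->
  forall i j, d 0 i / d 0 j <= cond (diag_mx d).
Proof.
move=> dp i j.
have sb := spec_bound (diag_mx d) (delta_mx i 0).
have e : diag_mx d *m delta_mx i 0 = d 0 i *: (delta_mx i 0 : 'cV[R]_n).
  apply/matrixP => a b; rewrite mul_diag_mx !mxE (ord1 b).
  by case: (eqVneq a i) => [->|na]; rewrite ?mulr1 ?mulr0.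
rewrite e sq2Z sq2_delta !mulr1 in sb.
have s0 := spec_ge0 (diag_mx d).
have di0 := dp i.
have hs : d 0 i <= spec_norm (diag_mx d) by nra.
have YY : (diag_mx d)^T *m diag_mx d = 1%:M *m diag_mx (\row_k (d 0 k ^+ 2)) *m (1%:M)^T.
  rewrite tr_diag_mx mulmx_diag trmx1 mul1mx mulmx1; congr diag_mx.
have WW : (1%:M : 'M[R]_n)^T *m 1%:M = 1%:M by rewrite trmx1 mulmx1.
have lp : forall k, 0 < (\row_k (d 0 k ^+ 2)) 0 k by move=> k; rewrite mxE exprn_gt0.
have [sb1 sb2] := sigma_bounds WW lp YY.
have sj : sigma_min (diag_mx d) <= d 0 j.
  by have := sb1 j; rewrite mxE sqrtr_sqr ger0_norm // ltW.
have sp := sb2 j.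
rewrite /cond; apply: (@le_trans _ _ (d 0 i / sigma_min (diag_mx d))).
  apply: ler_wpM2l; first exact: ltW.
  by rewrite lef_pV2 ?posrE.
by apply: ler_wpM2r => //; rewrite invr_ge0 ltW.
Qed.

Lemma weight_from_cond (ai aj c : R) : 0 < ai -> 0 < aj ->
  ai ^+ 3 / aj ^+ 3 <= c -> 1 <= c -> ai ^+ 2 <= c ^+ 2 * aj ^+ 2.
Proof.
move=> ai0 aj0 h c1.
have aj3 : 0 < aj ^+ 3 by rewrite exprn_gt0.
rewrite ler_pdivrMr // in h.
have [hle|hlt] := lerP ai aj.
  have h1 : ai ^+ 2 <= aj ^+ 2 by rewrite ler_pXn2r // ?nnegrE ltW.
  have h2 : aj ^+ 2 <= c ^+ 2 * aj ^+ 2 by rewrite ler_peMl ?exprn_ege1 // sqr_ge0.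
  exact: le_trans h1 h2.
have hc : ai <= c * aj.
  rewrite leNgt; apply/negP => hh.
  have e1 : c * aj ^+ 3 = (c * aj) * aj ^+ 2 by ring.
  have e2 : (c * aj) * aj ^+ 2 < ai * aj ^+ 2 by rewrite ltr_pM2r ?exprn_gt0.
  have e3 : ai * aj ^+ 2 < ai ^+ 3 by rewrite [ai ^+ 3]exprS ltr_pM2l // ltr_pXn2r // nnegrE ltW.
  have : c * aj ^+ 3 < ai ^+ 3 by rewrite e1 (lt_trans e2 e3).
  by rewrite ltNge h.
have : ai ^+ 2 <= (c * aj) ^+ 2.
  by rewrite ler_pXn2r // ?nnegrE ?(ltW ai0) // (le_trans (ltW ai0) hc).
by rewrite exprMn.
Qed.

End Main.

Unset Implicit Arguments.

Theorem lemma3p6 (R : realType) (n1 n2 r : nat) (L : 'M[R]_n1)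
  (Xt X : 'M[R]_(n1, n2)) (Ut U : 'M[R]_(n1, r)) (St S : 'M[R]_r)
  (Vt V : 'M[R]_(n2, r)) (Pt P : 'M[R]_r) :
  is_diag_mx L -> (forall i, 0 < L i i) ->
  is_compact_svd Xt Ut St Vt -> is_compact_svd X U S V ->
  is_inv_sqrtmx Pt (Ut^T *m diag_powR L (1 / 4) *m Ut) ->
  is_inv_sqrtmx P (U^T *m diag_powR L (1 / 4) *m U) ->
  opnormM (diag_powR L (1 / 4))
    ((Ut *m Pt) *m (Ut *m Pt)^T *m diag_powR L (1 / 4)
     - (U *m P) *m (U *m P)^T *m diag_powR L (1 / 4))
  <= cond (diag_powR L (3 / 8)) / sigma_min X * spec_norm (Xt - X).
Proof.
move=> _ Lpos [UtU VtV Stdiag Stpos XtE] [UU VV Sdiag Spos XE] [PtT _ PtPt] [PT _ PP].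
pose a := fun i => L i i `^ (1 / 8).
have a0 : forall i, 0 < a i by move=> i; apply: powR_gt0.
pose mrow := \row_i (a i ^+ 2) : 'rV[R]_n1.
pose drow := \row_i (a i ^+ 3) : 'rV[R]_n1.
have ME : diag_powR L (1 / 4) = diag_mx mrow.
  by rewrite diag_powR_E; congr diag_mx; apply/rowP => i; rewrite !mxE pow14 // ltW.
have DE : diag_powR L (3 / 8) = diag_mx drow.
  by rewrite diag_powR_E; congr diag_mx; apply/rowP => i; rewrite !mxE pow38 // ltW.
rewrite ME DE; rewrite ME in PtPt PP.
set M := diag_mx mrow.
set c := cond (diag_mx drow).
set sig := sigma_min X.
set E := spec_norm (Xt - X).
have MT : M^T = M by apply: tr_diag_mx.
have mp : forall i, 0 < mrow 0 i by move=> i; rewrite mxE exprn_gt0.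
have dp : forall i, 0 < drow 0 i by move=> i; rewrite mxE exprn_gt0.
have Mpd := diag_pd mp.
have c0 : 0 <= c by apply: cond_ge0.
have sig0 : 0 <= sig by apply: sigma_ge0.
have E0 : 0 <= E by apply: spec_ge0.
set k := c / sig * E.
have k0 : 0 <= k by rewrite /k mulr_ge0 // divr_ge0.
have Gunit : forall W : 'M[R]_(n1, r), W^T *m W = 1%:M -> W^T *m M *m W \in unitmx.
  move=> W WW; rewrite unitmxE unitfE; apply/negP => /det0P [v nv vG].
  have : qf M (W *m v^T) = 0.
    rewrite /qf /ip trmx_mul trmxK !mulmxA; rewrite !mulmxA in vG.
    by rewrite vG mul0mx mxE.
  move/(qf_eq0 Mpd) => h.
  have : v^T = 0 by rewrite -(mul1mx v^T) -WW -mulmxA h mulmx0.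
  by move/(congr1 trmx); rewrite trmxK trmx0 => v0; rewrite v0 eqxx in nv.
pose Q := P *m P^T; pose B := Q *m U^T *m M.
pose Qt := Pt *m Pt^T; pose Bt := Qt *m Ut^T *m M.
have BU : B *m U = 1%:M.
  have -> : B *m U = Q *m (U^T *m M *m U) by rewrite /B !mulmxA.
  by rewrite /Q PT PP mulVmx // Gunit.
have BUt : Bt *m Ut = 1%:M.
  have -> : Bt *m Ut = Qt *m (Ut^T *m M *m Ut) by rewrite /Bt !mulmxA.
  by rewrite /Qt PtT PtPt mulVmx // Gunit.
have SA : (U *m B)^T *m M = M *m (U *m B).
  by rewrite /B /Q !trmx_mul !trmxK MT !mulmxA.
have SAt : (Ut *m Bt)^T *m M = M *m (Ut *m Bt).
  by rewrite /Bt /Qt !trmx_mul !trmxK MT !mulmxA.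
have Aeq : (Ut *m Pt) *m (Ut *m Pt)^T *m M - (U *m P) *m (U *m P)^T *m M = proj Ut Bt - proj U B.
  by rewrite /proj /Bt /B /Qt /Q !trmx_mul !mulmxA.
rewrite Aeq.
have hm0 : forall i, 0 <= mrow 0 i by move=> i; exact: ltW.
have cd := cond_diag dp.
have c1 : forall i : 'I_n1, 1 <= c.
  by move=> i; have := cd i i; rewrite divff // gt_eqF.
have key : forall x, qf M ((proj Ut Bt - proj U B) *m x) <= k ^+ 2 * qf M x.
  move=> x.
  have [r0|rpos] := posnP r.
    subst r.
    rewrite mulmxBl /proj [Ut]thinmx0 [U]thinmx0 !mul0mx subrr qf0.
    by rewrite mulr_ge0 ?sqr_ge0 ?(qf_ge0 Mpd).
  pose sr := \row_j S j j : 'rV[R]_r.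
  have SE : S = diag_mx sr.
    apply/matrixP => i j; rewrite !mxE; case: (eqVneq i j) => [->|nij]; first by rewrite mulr1n.
    by rewrite mulr0n; apply/(is_diag_mxP Sdiag).
  have XX : X^T *m X = V *m diag_mx (\row_j (sr 0 j ^+ 2)) *m V^T.
    rewrite XE !trmx_mul trmxK -!mulmxA (mulmxA U^T) UU mul1mx !mulmxA.
    congr (_ *m _); rewrite -mulmxA; congr (_ *m _).
    rewrite SE tr_diag_mx mulmx_diag; congr diag_mx.
  have lpS : forall j, 0 < (\row_j (sr 0 j ^+ 2)) 0 j by move=> j; rewrite !mxE exprn_gt0.
  have [sb1 sb2] := sigma_bounds VV lpS XX.
  have sp : 0 < sig := sb2 (Ordinal rpos).
  have sS : forall i, sig <= S i i.
    by move=> i; have := sb1 i; rewrite !mxE sqrtr_sqr ger0_norm // ltW.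
  have hm : forall i j, mrow 0 i <= c ^+ 2 * mrow 0 j.
    move=> i j; rewrite !mxE; apply: weight_from_cond => //; last exact: c1 i.
    by have := cd i j; rewrite !mxE.
  apply: (final MT Mpd BU SA BUt SAt) => b.
  set w := proj U B *m b.
  set cb := B *m b.
  have wE : w = U *m cb by rewrite /w /cb /proj mulmxA.
  have [w0|nw] := eqVneq w 0.
    by rewrite w0 mulmx0 subr0 qf0 mulr_ge0 ?sqr_ge0 ?(qf_ge0 Mpd).
  pose g := \col_i (cb i 0 / S i i) : 'cV[R]_r.
  have Sg : S *m g = cb.
    apply/matrixP => i j; rewrite SE mul_diag_mx !mxE (ord1 j) mulrCA divff ?mulr1 //.
    by rewrite gt_eqF.
  have XV : X *m V = U *m S by rewrite XE -mulmxA VV mulmx1.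
  have wX : w = X *m (V *m g) by rewrite mulmxA XV -mulmxA Sg wE.
  have PtXt : proj Ut Bt *m Xt = Xt by rewrite XtE !mulmxA (projU BUt).
  set z := V *m g.
  set y := (Xt - X) *m z.
  have ey : qf M (w - proj Ut Bt *m w) = qf M (y - proj Ut Bt *m y).
    have -> : y - proj Ut Bt *m y = proj Ut Bt *m w - w.
      by rewrite /y mulmxBl -wX mulmxBr mulmxA PtXt opprB addrC addrA subrK.
    by rewrite (qf_subC MT).
  have ha : qf M (y - proj Ut Bt *m y) <= qf M y := qf_coproj_le MT Mpd BUt SAt y.
  have hb := weight_le y w hm hm0.
  have hc := spec_bound (Xt - X) z.
  have hd : sq2 z = sq2 g := sq2_orth g VV.
  have he : sig ^+ 2 * sq2 g <= sq2 cb.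
    rewrite !sq2E mulr_sumr; apply: ler_sum => i _; rewrite mxE.
    have Si := Spos i.
    have t1 : sig / S i i <= 1 by rewrite ler_pdivrMr // mul1r.
    have t0 : 0 <= sig / S i i by rewrite divr_ge0 // ltW.
    have -> : sig ^+ 2 * (cb i 0 / S i i) ^+ 2 = cb i 0 ^+ 2 * (sig / S i i) ^+ 2.
      by rewrite !expr_div_n; ring.
    by rewrite ler_piMr ?sqr_ge0 // exprn_ile1.
  have hf : sq2 w = sq2 cb by rewrite wE sq2_orth.
  rewrite ey.
  have W2p : 0 < sq2 w by apply: sq2_gt0.
  have Qw0 : 0 <= qf M w by apply: (qf_ge0 Mpd).
  have Qy0 : 0 <= qf M y by apply: (qf_ge0 Mpd).
  have G0 : 0 <= sq2 g by apply: sq2_ge0.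
  have ek : k ^+ 2 * qf M w = (c ^+ 2 * E ^+ 2 * qf M w) / sig ^+ 2.
    by rewrite /k; field; rewrite gt_eqF.
  rewrite ek ler_pdivlMr ?exprn_gt0 // -(ler_pM2r W2p).
  have h1 : qf M (y - proj Ut Bt *m y) * sq2 w <= c ^+ 2 * sq2 y * qf M w.
    exact: le_trans (ler_wpM2r (ltW W2p) ha) hb.
  have h2 : c ^+ 2 * sq2 y * qf M w <= c ^+ 2 * (E ^+ 2 * sq2 g) * qf M w.
    by rewrite ler_wpM2r // ler_wpM2l ?sqr_ge0 // -hd.
  have h3 : sig ^+ 2 * (c ^+ 2 * (E ^+ 2 * sq2 g) * qf M w) <= c ^+ 2 * E ^+ 2 * qf M w * sq2 w.
    rewrite hf.
    rewrite [leLHS](_ : _ = (c ^+ 2 * E ^+ 2 * qf M w) * (sig ^+ 2 * sq2 g)); last ring.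
    apply: ler_wpM2l; last exact: he.
    by apply: mulr_ge0 => //; apply: mulr_ge0; apply: sqr_ge0.
  apply: le_trans h3.
  rewrite [leLHS](_ : _ = sig ^+ 2 * (qf M (y - proj Ut Bt *m y) * sq2 w)); last ring.
  by rewrite ler_wpM2l ?sqr_ge0 // (le_trans h1 h2).
rewrite /opnormM; set SS := (T in sup T).
case: (pselect (exists x : 'cV[R]_n1, x != 0)) => [[x0 nx0]|h].
  apply: ge_sup.
    by exists (vnormM M ((proj Ut Bt - proj U B) *m x0) / vnormM M x0); exists x0.
  move=> _ [x nx <-].
  have qx : 0 < qf M x := Mpd x nx.
  change (Num.sqrt (qf M ((proj Ut Bt - proj U B) *m x)) / Num.sqrt (qf M x) <= k).
  rewrite ler_pdivrMr ?sqrtr_gt0 //.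
  have hk := key x.
  rewrite -(ger0_norm k0) -sqrtr_sqr -sqrtrM ?sqr_ge0 //.
  rewrite ler_sqrt; first exact: hk.
  by rewrite mulr_ge0 ?sqr_ge0 // ltW.
have -> : SS = set0 by apply/seteqP; split => // t [x nx _]; case: h; exists x.
by rewrite sup0.
Qed.
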